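(* Let $H$ be a real Hilbert space and let $A_1,A_2,\dots,A_k$ be non-empty, convex and closed subsets of $H$. Then for every $r>0$ the set $$F_r=\{\alpha\in[0,1]:P_{A_k}^\alpha P_{A_{k-1}}^\alpha\cdots P_{A_1}^\alpha\text{ has a fixed point }x\text{ with }\|x\|\leq r\}$$ is closed in $[0,1]$.
   Context: For a non-empty, convex, closed subset $A$ of a real Hilbert space $H$, $P_A:H\to A$ denotes the metric (nearest-point) projection onto $A$. For $\alpha\in[0,1]$, the $\alpha$-relaxed projection onto $A$ is the map $P_A^\alpha:H\to H$, $P_A^\alpha(x)=\alpha P_A(x)+(1-\alpha)x$. Compositions are written as products. *)

(* Defs.v *)
From Stdlib Require Import Reals Lra ClassicalEpsilon.
Open Scope R_scope.

Record Hilbert := {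
  H :> Type;
  hzero : H;
  hadd : H -> H -> H;
  hopp : H -> H;
  hscal : R -> H -> H;
  hinner : H -> H -> R;
  hadd_assoc : forall x y z, hadd x (hadd y z) = hadd (hadd x y) z;
  hadd_comm : forall x y, hadd x y = hadd y x;
  hadd_zero : forall x, hadd x hzero = x;
  hadd_opp : forall x, hadd x (hopp x) = hzero;
  hscal_assoc : forall a b x, hscal a (hscal b x) = hscal (a * b) x;
  hscal_one : forall x, hscal 1 x = x;
  hscal_distr_vec : forall a x y, hscal a (hadd x y) = hadd (hscal a x) (hscal a y);
  hscal_distr_scal : forall a b x, hscal (a + b) x = hadd (hscal a x) (hscal b x);
  hinner_sym : forall x y, hinner x y = hinner y x;
  hinner_add : forall x y z, hinner (hadd x y) z = hinner x z + hinner y z;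
  hinner_scal : forall a x y, hinner (hscal a x) y = a * hinner x y;
  hinner_pos : forall x, 0 <= hinner x x;
  hinner_def : forall x, hinner x x = 0 -> x = hzero;
  hcomplete : forall u : nat -> H,
    (forall eps, 0 < eps -> exists N, forall m n, (N <= m)%nat -> (N <= n)%nat ->
        sqrt (hinner (hadd (u m) (hopp (u n))) (hadd (u m) (hopp (u n)))) < eps) ->
    exists l, forall eps, 0 < eps -> exists N, forall n, (N <= n)%nat ->
        sqrt (hinner (hadd (u n) (hopp l)) (hadd (u n) (hopp l))) < eps
}.

Section Ops.
Context {E : Hilbert}.

Definition hsub (x y : E) : E := hadd E x (hopp E y).
Definition hnorm (x : E) : R := sqrt (hinner E x x).

Definition nonempty (A : E -> Prop) : Prop := exists x, A x.
Definition convex (A : E -> Prop) : Prop :=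
  forall x y t, A x -> A y -> 0 <= t <= 1 ->
    A (hadd E (hscal E t x) (hscal E (1 - t) y)).
Definition closed (A : E -> Prop) : Prop :=
  forall x, (forall eps, 0 < eps -> exists a, A a /\ hnorm (hsub x a) < eps) -> A x.

Definition is_nearest (A : E -> Prop) (x p : E) : Prop :=
  A p /\ forall a, A a -> hnorm (hsub x p) <= hnorm (hsub x a).

(* metric projection P_A x := the nearest point of x in A
   (exists and is unique for nonempty closed convex A) *)
Definition proj (A : E -> Prop) (x : E) : E :=
  epsilon (inhabits (hzero E)) (fun p => is_nearest A x p).

Definition relaxed_proj (alpha : R) (A : E -> Prop) (x : E) : E :=
  hadd E (hscal E alpha (proj A x)) (hscal E (1 - alpha) x).

(* P_{A_{k-1}}^alpha ... P_{A_0}^alpha, sets indexed 0..k-1 *)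
Fixpoint comp_relaxed (alpha : R) (A : nat -> E -> Prop) (k : nat) (x : E) : E :=
  match k with
  | O => x
  | S k' => relaxed_proj alpha (A k') (comp_relaxed alpha A k' x)
  end.

End Ops.

Definition F_set (E : Hilbert) (A : nat -> E -> Prop) (k : nat) (r : R) (alpha : R) : Prop :=
  0 <= alpha <= 1 /\
  exists x : E, comp_relaxed alpha A k x = x /\ hnorm x <= r.

(* Main.v *)
Require Import Defs.
From Stdlib Require Import Reals Lra Psatz Lia Classical ClassicalEpsilon.
Open Scope R_scope.

Section Basics.
Variable E : Hilbert.

Lemma inner_addr (x y z : E) : hinner E x (hadd E y z) = hinner E x y + hinner E x z.
Proof. rewrite !(hinner_sym E x), hinner_add; reflexivity. Qed.
Lemma inner_scalr a (x y : E) : hinner E x (hscal E a y) = a * hinner E x y.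
Proof. rewrite !(hinner_sym E x), hinner_scal; reflexivity. Qed.
Lemma inner_zerol (y : E) : hinner E (hzero E) y = 0.
Proof.
  assert (h := hinner_add E (hzero E) (hzero E) y).
  rewrite hadd_zero in h. lra.
Qed.
Lemma inner_zeror (y : E) : hinner E y (hzero E) = 0.
Proof. rewrite hinner_sym; apply inner_zerol. Qed.
Lemma inner_oppl (x y : E) : hinner E (hopp E x) y = - hinner E x y.
Proof.
  assert (h := hinner_add E x (hopp E x) y).
  rewrite hadd_opp, inner_zerol in h. lra.
Qed.
Lemma inner_oppr (x y : E) : hinner E x (hopp E y) = - hinner E x y.
Proof. rewrite !(hinner_sym E x); apply inner_oppl. Qed.

Lemma veq (u v : E) : hinner E (hsub u v) (hsub u v) = 0 -> u = v.
Proof.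
  intro h. apply hinner_def in h. unfold hsub in h.
  rewrite <- (hadd_zero E u), <- (hadd_opp E v), (hadd_comm E v), hadd_assoc, h.
  rewrite hadd_comm, hadd_zero; reflexivity.
Qed.
End Basics.

Ltac expand :=
  unfold hsub in *;
  repeat rewrite ?hinner_add, ?inner_addr, ?hinner_scal, ?inner_scalr,
    ?inner_oppl, ?inner_oppr, ?inner_zerol, ?inner_zeror.

Ltac symn := repeat match goal with
 | |- context [hinner ?E ?a ?b] => match goal with |- context [hinner E b a] =>
      tryif constr_eq a b then fail else rewrite (hinner_sym E a b) end end.

Ltac vring := expand; symn; ring.

Section Norms.
Variable E : Hilbert.

Lemma hnorm_nonneg (x : E) : 0 <= hnorm x.
Proof. apply sqrt_pos. Qed.
Lemma hnorm_sq (x : E) : hnorm x * hnorm x = hinner E x x.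
Proof. apply sqrt_sqrt, hinner_pos. Qed.
Lemma norm_le_of_sq (x : E) c : 0 <= c -> hinner E x x <= c * c -> hnorm x <= c.
Proof.
  intros hc h. unfold hnorm. rewrite <- (sqrt_square c hc). apply sqrt_le_1_alt; auto.
Qed.
Lemma sq_of_norm_le (x : E) c : hnorm x <= c -> hinner E x x <= c * c.
Proof.
  intro h. rewrite <- hnorm_sq. assert (0 <= hnorm x) by apply hnorm_nonneg. nra.
Qed.
Lemma norm_le_sq (x y : E) : hinner E x x <= hinner E y y -> hnorm x <= hnorm y.
Proof. intro h. apply norm_le_of_sq. apply hnorm_nonneg. rewrite hnorm_sq; auto. Qed.

Lemma zero_of_norm (x : E) : hnorm x = 0 -> x = hzero E.
Proof. intro h. apply hinner_def. rewrite <- hnorm_sq, h. ring. Qed.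

Lemma cs (x y : E) : hinner E x y <= hnorm x * hnorm y.
Proof.
  set (a := hnorm x). set (b := hnorm y).
  assert (ha : 0 <= a) by apply hnorm_nonneg.
  assert (hb : 0 <= b) by apply hnorm_nonneg.
  assert (haa : a * a = hinner E x x) by apply hnorm_sq.
  assert (hbb : b * b = hinner E y y) by apply hnorm_sq.
  destruct (Req_dec a 0) as [h0|h0].
  { apply zero_of_norm in h0. rewrite h0, inner_zerol. nra. }
  destruct (Req_dec b 0) as [h1|h1].
  { apply zero_of_norm in h1. rewrite h1, inner_zeror. nra. }
  assert (hp := hinner_pos E (hsub (hscal E b x) (hscal E a y))).
  assert (eq : hinner E (hsub (hscal E b x) (hscal E a y)) (hsub (hscal E b x) (hscal E a y))
     = b*b*hinner E x x - 2*a*b*hinner E x y + a*a*hinner E y y) by vring.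
  rewrite eq, <- haa, <- hbb in hp.
  assert (0 < a*b) by (apply Rmult_lt_0_compat; lra).
  nra.
Qed.

Lemma tri_add (x y : E) : hnorm (hadd E x y) <= hnorm x + hnorm y.
Proof.
  apply norm_le_of_sq. generalize (hnorm_nonneg x) (hnorm_nonneg y); lra.
  assert (h := cs x y). assert (h1 := hnorm_sq x). assert (h2 := hnorm_sq y).
  assert (eq : hinner E (hadd E x y) (hadd E x y) = hinner E x x + 2 * hinner E x y + hinner E y y) by vring.
  nra.
Qed.

Lemma tri_sub (x y z : E) : hnorm (hsub x z) <= hnorm (hsub x y) + hnorm (hsub y z).
Proof.
  assert (e : hsub x z = hadd E (hsub x y) (hsub y z)).
  { apply veq. vring. }
  rewrite e. apply tri_add.
Qed.

Lemma norm_sub_sym (x y : E) : hnorm (hsub x y) = hnorm (hsub y x).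
Proof. unfold hnorm. f_equal. vring. Qed.

Lemma norm_sub0 (x : E) : hnorm (hsub x (hzero E)) = hnorm x.
Proof. unfold hnorm. f_equal. vring. Qed.

Lemma norm_subxx (x : E) : hnorm (hsub x x) = 0.
Proof. unfold hnorm. replace (hinner E (hsub x x) (hsub x x)) with 0 by vring. apply sqrt_0. Qed.

Lemma eq_of_small (a b : E) : (forall eps, 0 < eps -> hnorm (hsub a b) <= eps) -> a = b.
Proof.
  intro h. assert (hn : hnorm (hsub a b) = 0).
  { destruct (Rle_lt_or_eq_dec 0 _ (hnorm_nonneg (hsub a b))) as [p|p]; [|auto].
    assert (q : 0 < hnorm (hsub a b) / 2) by lra. specialize (h _ q); lra. }
  apply veq. rewrite <- hnorm_sq, hn; ring.
Qed.

Lemma norm_triv (x y : E) : hnorm x <= hnorm (hsub x y) + hnorm y.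
Proof. assert (h := tri_sub x y (hzero E)). rewrite !norm_sub0 in h. exact h. Qed.
Lemma norm_triv2 (x y : E) : hnorm (hsub x y) <= hnorm x + hnorm y.
Proof. assert (h := tri_sub x (hzero E) y). rewrite (norm_sub0 x), (norm_sub_sym (hzero E) y), (norm_sub0 y) in h. exact h. Qed.

End Norms.
Ltac vfield := expand; symn; field.

Lemma le_eps a b : (forall eps, 0 < eps -> a <= b + eps) -> a <= b.
Proof.
  intro h. destruct (Rle_or_lt a b) as [l|l]; auto.
  assert (q : 0 < (a - b)/2) by lra. specialize (h _ q). lra.
Qed.

Lemma inv_small d : 0 < d -> exists N, forall n, (N <= n)%nat -> / INR (S n) < d.
Proof.
  intro hd. destruct (archimed_cor1 d hd) as [N [h1 h2]]. exists N. intros n hn.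
  eapply Rle_lt_trans; [|exact h1]. apply Rinv_le_contravar.
  apply lt_0_INR; lia. apply le_INR; lia.
Qed.

Lemma inv_pos n : 0 < / INR (S n).
Proof. apply Rinv_0_lt_compat, lt_0_INR; lia. Qed.

Section Proj.
Variable E : Hilbert.

Lemma complete (u : nat -> E) :
  (forall eps, 0 < eps -> exists N, forall m n, (N <= m)%nat -> (N <= n)%nat -> hnorm (hsub (u m) (u n)) < eps) ->
  exists l, forall eps, 0 < eps -> exists N, forall n, (N <= n)%nat -> hnorm (hsub (u n) l) < eps.
Proof. exact (hcomplete E u). Qed.

Lemma inf_exists (A : E -> Prop) (x : E) : nonempty A ->
  exists d, 0 <= d /\ (forall a, A a -> d <= hnorm (hsub x a)) /\
    (forall eps, 0 < eps -> exists a, A a /\ hnorm (hsub x a) < d + eps).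
Proof.
  intros [a0 ha0].
  set (S := fun t => exists a, A a /\ t = - hnorm (hsub x a)).
  assert (hb : bound S).
  { exists 0. intros t [a [_ ->]]. generalize (hnorm_nonneg _ (hsub x a)); lra. }
  assert (hne : exists t, S t) by (exists (- hnorm (hsub x a0)); exists a0; auto).
  destruct (completeness S hb hne) as [m [hub hlub]].
  exists (-m). split; [|split].
  - assert (m <= 0); [|lra]. apply hlub. intros t [a [_ ->]]. generalize (hnorm_nonneg _ (hsub x a)); lra.
  - intros a ha. assert (h : S (- hnorm (hsub x a))) by (exists a; auto). specialize (hub _ h). lra.
  - intros eps he. apply NNPP. intro hno.
    assert (hu : is_upper_bound S (m - eps)).
    { intros t [a [ha ->]]. destruct (Rle_or_lt (- hnorm (hsub x a)) (m - eps)) as [l|l]; auto.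
      exfalso. apply hno. exists a. split; auto. lra. }
    specialize (hlub _ hu). lra.
Qed.

Lemma nearest_exists (A : E -> Prop) x : nonempty A -> convex A -> closed A -> exists p, is_nearest A x p.
Proof.
  intros hne hcv hcl.
  destruct (inf_exists A x hne) as [d [hd0 [hdl hde]]].
  assert (hseq : forall n:nat, exists a, A a /\ hnorm (hsub x a) < d + / INR (S n)).
  { intro n. apply hde. apply inv_pos. }
  set (f := fun n => proj1_sig (constructive_indefinite_description _ (hseq n))).
  assert (hf : forall n, A (f n) /\ hnorm (hsub x (f n)) < d + / INR (S n)).
  { intro n. unfold f. destruct (constructive_indefinite_description _ _); auto. }
  assert (key : forall n m e, / INR (S n) <= e -> / INR (S m) <= e ->
     hinner E (hsub (f n) (f m)) (hsub (f n) (f m)) <= 8 * d * e + 4 * (e * e)).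
  { intros n m e hen hem. destruct (hf n) as [an hn]. destruct (hf m) as [am hm].
    set (mid := hadd E (hscal E (/2) (f n)) (hscal E (1 - /2) (f m))).
    assert (hmid : A mid) by (apply hcv; auto; lra).
    assert (hdm := hdl _ hmid).
    assert (id : hinner E (hsub (f n) (f m)) (hsub (f n) (f m)) =
       2 * hinner E (hsub x (f n)) (hsub x (f n)) + 2 * hinner E (hsub x (f m)) (hsub x (f m))
       - 4 * hinner E (hsub x mid) (hsub x mid)) by (unfold mid; vfield).
    rewrite id, <- !hnorm_sq.
    generalize (hnorm_nonneg _ (hsub x (f n))) (hnorm_nonneg _ (hsub x (f m))) (inv_pos n) (inv_pos m); intros.
    assert (hnn : hnorm (hsub x (f n)) < d + e) by lra.
    assert (hmm : hnorm (hsub x (f m)) < d + e) by lra.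
    assert (d * d <= hnorm (hsub x mid) * hnorm (hsub x mid)) by nra.
    assert (hnorm (hsub x (f n)) * hnorm (hsub x (f n)) <= (d+e)*(d+e)) by nra.
    assert (hnorm (hsub x (f m)) * hnorm (hsub x (f m)) <= (d+e)*(d+e)) by nra.
    nra. }
  assert (hC : forall eps, 0 < eps -> exists N, forall m n, (N <= m)%nat -> (N <= n)%nat -> hnorm (hsub (f m) (f n)) < eps).
  { intros eps he.
    set (del := Rmin 1 (eps * eps / (8 * d + 5))).
    assert (hdel : 0 < del).
    { unfold del. apply Rmin_pos; [lra|]. apply Rdiv_lt_0_compat; nra. }
    destruct (inv_small del hdel) as [N hN]. exists N. intros m n hm hn.
    assert (k := key m n del (Rlt_le _ _ (hN m hm)) (Rlt_le _ _ (hN n hn))).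
    assert (h1 : del <= 1) by apply Rmin_l.
    assert (h2 : del <= eps * eps / (8 * d + 5)) by apply Rmin_r.
    assert (h3 : del * (8 * d + 5) <= eps * eps).
    { apply (Rmult_le_compat_r (8*d+5)) in h2; [|lra].
      unfold Rdiv in h2. rewrite Rmult_assoc, Rinv_l in h2; lra. }
    assert (hnorm (hsub (f m) (f n)) * hnorm (hsub (f m) (f n)) < eps * eps).
    { rewrite hnorm_sq. nra. }
    generalize (hnorm_nonneg _ (hsub (f m) (f n))); nra. }
  destruct (complete f hC) as [p hp].
  assert (hpA : A p).
  { apply hcl. intros eps he. destruct (hp eps he) as [N hN]. exists (f N). split.
    apply hf. rewrite norm_sub_sym. apply hN; lia. }
  exists p. split; auto. intros a ha. apply Rle_trans with d; auto.
  apply le_eps. intros eps he.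
  assert (he2 : 0 < eps / 2) by lra.
  destruct (hp _ he2) as [N1 hN1]. destruct (inv_small _ he2) as [N2 hN2].
  set (n := Nat.max N1 N2).
  assert (a1 := hN1 n ltac:(lia)). assert (a2 := hN2 n ltac:(lia)).
  assert (a3 := proj2 (hf n)). assert (a4 := tri_sub _ x (f n) p).
  lra.
Qed.

Lemma proj_spec (A : E -> Prop) x : nonempty A -> convex A -> closed A -> is_nearest A x (proj A x).
Proof.
  intros h1 h2 h3. unfold proj. apply epsilon_spec. apply nearest_exists; auto.
Qed.

Lemma var_ineq (A : E -> Prop) x p : convex A -> is_nearest A x p ->
  forall a, A a -> hinner E (hsub x p) (hsub a p) <= 0.
Proof.
  intros hcv [hp hn] a ha.
  set (c := hinner E (hsub x p) (hsub a p)).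
  set (D := hinner E (hsub a p) (hsub a p)).
  assert (hD : 0 <= D) by apply hinner_pos.
  assert (key : forall t, 0 < t <= 1 -> 2 * c <= t * D).
  { intros t ht.
    set (q := hadd E (hscal E t a) (hscal E (1 - t) p)).
    assert (hq : A q) by (apply hcv; auto; lra).
    assert (h := hn _ hq).
    assert (h' : hinner E (hsub x p) (hsub x p) <= hinner E (hsub x q) (hsub x q)).
    { rewrite <- !hnorm_sq. generalize (hnorm_nonneg _ (hsub x p)); nra. }
    assert (id : hinner E (hsub x q) (hsub x q) = hinner E (hsub x p) (hsub x p) - 2 * t * c + t * t * D)
      by (unfold q, c, D; vring).
    rewrite id in h'. nra. }
  destruct (Rle_or_lt c 0) as [l|l]; auto.
  set (t := Rmin 1 (c / (D + 1))).
  assert (ht : 0 < t). { unfold t. apply Rmin_pos; [lra|]. apply Rdiv_lt_0_compat; lra. }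
  assert (h1 : t <= 1) by apply Rmin_l.
  assert (h2 : t <= c / (D + 1)) by apply Rmin_r.
  assert (h3 : t * (D + 1) <= c).
  { apply (Rmult_le_compat_r (D+1)) in h2; [|lra].
    unfold Rdiv in h2. rewrite Rmult_assoc, Rinv_l in h2; lra. }
  specialize (key t (conj ht h1)). nra.
Qed.

End Proj.

Section Relax.
Variable E : Hilbert.
Variable A : E -> Prop.
Hypothesis hA : nonempty A /\ convex A /\ closed A.

Lemma pspec x : is_nearest A x (proj A x).
Proof. destruct hA as [h1 [h2 h3]]. apply proj_spec; auto. Qed.

Lemma proj_fix a : A a -> proj A a = a.
Proof.
  intro ha. destruct (pspec a) as [_ hn]. specialize (hn _ ha).
  rewrite norm_subxx in hn. symmetry. apply veq. rewrite <- hnorm_sq.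
  generalize (hnorm_nonneg _ (hsub a (proj A a))); intro. assert (hnorm (hsub a (proj A a)) = 0) by lra.
  rewrite H0; ring.
Qed.

Lemma firm x y : hinner E (hsub (proj A x) (proj A y)) (hsub (proj A x) (proj A y))
   <= hinner E (hsub (proj A x) (proj A y)) (hsub x y).
Proof.
  destruct hA as [_ [hcv _]].
  assert (h1 := var_ineq E A x (proj A x) hcv (pspec x) (proj A y) (proj1 (pspec y))).
  assert (h2 := var_ineq E A y (proj A y) hcv (pspec y) (proj A x) (proj1 (pspec x))).
  assert (id : hinner E (hsub (proj A x) (proj A y)) (hsub x y) - hinner E (hsub (proj A x) (proj A y)) (hsub (proj A x) (proj A y))
    = - (hinner E (hsub x (proj A x)) (hsub (proj A y) (proj A x)) + hinner E (hsub y (proj A y)) (hsub (proj A x) (proj A y))))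
    by vring.
  lra.
Qed.

Lemma relax_nonexp al x y : 0 <= al <= 1 ->
  hnorm (hsub (relaxed_proj al A x) (relaxed_proj al A y)) <= hnorm (hsub x y).
Proof.
  intro hal. apply norm_le_sq.
  set (u := hsub (proj A x) (proj A y)). set (v := hsub x y).
  assert (id : hinner E (hsub (relaxed_proj al A x) (relaxed_proj al A y)) (hsub (relaxed_proj al A x) (relaxed_proj al A y))
     = al * al * hinner E u u + 2 * al * (1 - al) * hinner E u v + (1 - al) * (1 - al) * hinner E v v)
    by (unfold relaxed_proj, u, v; vring).
  rewrite id.
  assert (hf := firm x y). fold u v in hf.
  assert (hw := hinner_pos E (hsub v u)).
  assert (idw : hinner E (hsub v u) (hsub v u) = hinner E v v - 2 * hinner E u v + hinner E u u) by vring.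
  rewrite idw in hw.
  assert (p1 : 0 <= al * (2 * (hinner E u v - hinner E u u))) by (apply Rmult_le_pos; lra).
  assert (p2 : 0 <= al * (2 - al) * (hinner E v v - 2 * hinner E u v + hinner E u u)) by (apply Rmult_le_pos; [apply Rmult_le_pos|]; lra).
  nra.
Qed.

Lemma relax_fix al a : A a -> relaxed_proj al A a = a.
Proof. intro ha. unfold relaxed_proj. rewrite (proj_fix a ha). apply veq. vring. Qed.

Lemma relax_diff al be y :
  hnorm (hsub (relaxed_proj al A y) (relaxed_proj be A y)) <= Rabs (al - be) * hnorm (hsub (proj A y) y).
Proof.
  apply norm_le_of_sq. apply Rmult_le_pos; [apply Rabs_pos|apply hnorm_nonneg].
  assert (id : hinner E (hsub (relaxed_proj al A y) (relaxed_proj be A y)) (hsub (relaxed_proj al A y) (relaxed_proj be A y))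
     = (al - be) * (al - be) * hinner E (hsub (proj A y) y) (hsub (proj A y) y)) by (unfold relaxed_proj; vring).
  rewrite id, <- hnorm_sq.
  assert (e : Rabs (al - be) * Rabs (al - be) = (al - be) * (al - be)).
  { rewrite <- Rabs_mult. apply Rabs_pos_eq. apply Rle_0_sqr. }
  replace (Rabs (al - be) * hnorm (hsub (proj A y) y) * (Rabs (al - be) * hnorm (hsub (proj A y) y)))
    with ((Rabs (al - be) * Rabs (al - be)) * (hnorm (hsub (proj A y) y) * hnorm (hsub (proj A y) y))) by ring.
  rewrite e. lra.
Qed.

Lemma proj_disp c y : A c -> hnorm (hsub (proj A y) y) <= hnorm (hsub y c).
Proof. intro hc. rewrite norm_sub_sym. apply (proj2 (pspec y)); auto. Qed.

End Relax.

Section Comp.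
Variable E : Hilbert.
Variable A : nat -> E -> Prop.
Variable k : nat.
Hypothesis hA : forall i, (i < k)%nat -> nonempty (A i) /\ convex (A i) /\ closed (A i).

Lemma comp_nonexp al : 0 <= al <= 1 -> forall j, (j <= k)%nat -> forall x y,
  hnorm (hsub (comp_relaxed al A j x) (comp_relaxed al A j y)) <= hnorm (hsub x y).
Proof.
  intros hal j. induction j as [|j IH]; intros hj x y.
  - cbn [comp_relaxed]. lra.
  - cbn [comp_relaxed]. eapply Rle_trans. apply (relax_nonexp E (A j)); [apply hA; lia | auto].
    apply IH; lia.
Qed.

Lemma comp_bound al r : 0 <= al <= 1 -> 0 <= r -> forall j, (j <= k)%nat ->
  exists B S, 0 <= B /\ 0 <= S /\ forall be x, 0 <= be <= 1 -> hnorm x <= r ->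
    hnorm (comp_relaxed be A j x) <= B /\
    hnorm (hsub (comp_relaxed al A j x) (comp_relaxed be A j x)) <= Rabs (al - be) * S.
Proof.
  intros hal hr j. induction j as [|j IH]; intros hj.
  - exists r, 0. split; [lra|split;[lra|]]. intros be x hbe hx. cbn [comp_relaxed].
    rewrite norm_subxx. split; [lra|]. rewrite Rmult_0_r; lra.
  - destruct IH as [B [S [hB [hS IH]]]]; [lia|].
    assert (hAj := hA j ltac:(lia)). destruct hAj as [[c hc] _].
    assert (hnc : 0 <= hnorm c) by apply hnorm_nonneg.
    exists (B + 2 * hnorm c), (S + B + hnorm c). split; [lra|split;[lra|]].
    intros be x hbe hx. destruct (IH be x hbe hx) as [h1 h2].
    cbn [comp_relaxed].
    set (y := comp_relaxed be A j x). set (y' := comp_relaxed al A j x). fold y y' in h1, h2.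
    assert (hgood : nonempty (A j) /\ convex (A j) /\ closed (A j)) by (apply hA; lia).
    split.
    + assert (t1 := norm_triv E (relaxed_proj be (A j) y) c).
      rewrite <- (relax_fix E (A j) hgood be c hc) in t1 at 1.
      assert (t2 := relax_nonexp E (A j) hgood be y c hbe).
      assert (t3 := norm_triv2 E y c). lra.
    + assert (t1 := tri_sub E (relaxed_proj al (A j) y') (relaxed_proj al (A j) y) (relaxed_proj be (A j) y)).
      assert (t2 := relax_nonexp E (A j) hgood al y' y hal).
      assert (t3 := relax_diff E (A j) al be y).
      assert (t4 := proj_disp E (A j) hgood c y hc).
      assert (t5 := norm_triv2 E y c). 
      assert (ha := Rabs_pos (al - be)).
      assert (Rabs (al - be) * hnorm (hsub (proj (A j) y) y) <= Rabs (al - be) * (B + hnorm c)).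
      { apply Rmult_le_compat_l; [exact ha | lra]. }
      nra.
Qed.
End Comp.

Lemma pow_le1 q p : 0 <= q <= 1 -> q ^ p <= 1.
Proof.
  intro h. induction p; simpl; [lra|]. assert (0 <= q ^ p) by (apply pow_le; lra). nra.
Qed.

Section Banach.
Variable E : Hilbert.

Lemma banach (G : E -> E) q : 0 <= q < 1 ->
  (forall x y, hnorm (hsub (G x) (G y)) <= q * hnorm (hsub x y)) -> exists z, G z = z.
Proof.
  intros hq hG.
  set (y := fun n => Nat.iter n G (hzero E)).
  assert (ys : forall n, y (S n) = G (y n)) by reflexivity.
  set (d0 := hnorm (hsub (y 1%nat) (y 0%nat))).
  assert (hd0 : 0 <= d0) by apply hnorm_nonneg.
  assert (step : forall n, hnorm (hsub (y (S n)) (y n)) <= q ^ n * d0).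
  { induction n. rewrite pow_O, Rmult_1_l. apply Rle_refl. rewrite (ys (S n)), (ys n). eapply Rle_trans. apply hG.
    simpl. rewrite Rmult_assoc. apply Rmult_le_compat_l; [lra|]. rewrite <- ys. exact IHn. }
  assert (tail : forall n p, (1 - q) * hnorm (hsub (y (p + n)%nat) (y n)) <= q ^ n * d0 * (1 - q ^ p)).
  { intros n p. induction p.
    - simpl. rewrite norm_subxx. lra.
    - assert (t := tri_sub E (y (S p + n)%nat) (y (p + n)%nat) (y n)).
      assert (s := step (p + n)%nat). rewrite pow_add in s. simpl plus in *.
      assert (t' : (1 - q) * hnorm (hsub (y (S (p + n))) (y n)) <=
         (1 - q) * (hnorm (hsub (y (S (p + n))) (y (p + n)%nat)) + hnorm (hsub (y (p + n)%nat) (y n))))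
        by (apply Rmult_le_compat_l; lra).
      assert (s' : (1 - q) * hnorm (hsub (y (S (p + n))) (y (p + n)%nat)) <= (1 - q) * (q ^ p * q ^ n * d0))
        by (apply Rmult_le_compat_l; lra).
      simpl pow. nra. }
  assert (bound : forall m n, (n <= m)%nat -> (1 - q) * hnorm (hsub (y m) (y n)) <= q ^ n * d0).
  { intros m n hmn. replace m with ((m - n) + n)%nat by lia.
    eapply Rle_trans. apply tail.
    assert (0 <= q ^ (m - n)) by (apply pow_le; lra).
    assert (q ^ (m - n) <= 1) by (apply pow_le1; lra).
    assert (0 <= q ^ n) by (apply pow_le; lra). assert (0 <= q ^ n * d0) by (apply Rmult_le_pos; lra). nra. }
  assert (hC : forall eps, 0 < eps -> exists N, forall m n, (N <= m)%nat -> (N <= n)%nat -> hnorm (hsub (y m) (y n)) < eps).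
  { intros eps he.
    assert (hdel : 0 < eps * (1 - q) / (d0 + 1)) by (apply Rdiv_lt_0_compat; nra).
    assert (hq1 : Rabs q < 1) by (rewrite Rabs_pos_eq; lra).
    destruct (pow_lt_1_zero q hq1 _ hdel) as [N hN]. exists N.
    assert (key : forall m n, (N <= n)%nat -> (n <= m)%nat -> hnorm (hsub (y m) (y n)) < eps).
    { intros m n hn hmn. assert (b := bound m n hmn). specialize (hN n hn).
      rewrite Rabs_pos_eq in hN by (apply pow_le; lra).
      assert (hh : q ^ n * (d0 + 1) < eps * (1 - q)).
      { apply (Rmult_lt_compat_r (d0 + 1)) in hN; [|lra].
        unfold Rdiv in hN. rewrite Rmult_assoc, Rinv_l in hN; lra. }
      assert (0 <= q ^ n) by (apply pow_le; lra).
      assert (hnn := hnorm_nonneg E (hsub (y m) (y n))).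
      destruct (Rle_or_lt eps (hnorm (hsub (y m) (y n)))) as [l|l]; auto.
      exfalso. assert ((1 - q) * eps <= (1 - q) * hnorm (hsub (y m) (y n))) by (apply Rmult_le_compat_l; lra).
      nra. }
    intros m n hm hn. destruct (Nat.le_ge_cases n m).
    apply key; auto. rewrite norm_sub_sym. apply key; auto. }
  destruct (complete E y hC) as [l hl]. exists l.
  apply eq_of_small. intros eps he.
  assert (he2 : 0 < eps / 2) by lra.
  destruct (hl _ he2) as [N hN].
  assert (a1 := hN N (le_n _)). assert (a2 := hN (S N) ltac:(lia)).
  rewrite ys in a2.
  assert (t := tri_sub E (G l) (G (y N)) l).
  assert (g := hG l (y N)). rewrite norm_sub_sym in a1.
  assert (0 <= hnorm (hsub l (y N))) by apply hnorm_nonneg.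
  assert (q * hnorm (hsub l (y N)) <= hnorm (hsub l (y N))) by nra.
  rewrite norm_sub_sym in a2. rewrite (norm_sub_sym E (G (y N)) l) in t.
  lra.
Qed.
End Banach.

Lemma rl2 p q X Y P : 0 < q < p -> 0 <= - p * X - q * Y + (p + q) * P -> 0 <= X + Y - 2 * P ->
  X <= Y /\ X + Y - 2 * P <= Y - X.
Proof.
  intros hpq hM hD.
  assert (h1 : (p + q) * (X + Y - 2 * P) <= (p - q) * (Y - X)) by nra.
  assert (h2 : 0 <= (p - q) * (Y - X)) by nra.
  assert (h3 : X <= Y) by nra.
  split; auto. nra.
Qed.

Section Fix.
Variable E : Hilbert.
Variable T : E -> E.
Hypothesis hT : forall x y, hnorm (hsub (T x) (T y)) <= hnorm (hsub x y).
Variable r : R.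
Hypothesis hr : 0 <= r.
Hypothesis happ : forall eps, 0 < eps -> exists x, hnorm x <= r /\ hnorm (hsub (T x) x) <= eps.

Lemma mono x y : 0 <= hinner E (hsub (hsub x (T x)) (hsub y (T y))) (hsub x y).
Proof.
  assert (id : hinner E (hsub (hsub x (T x)) (hsub y (T y))) (hsub x y) =
     hinner E (hsub x y) (hsub x y) - hinner E (hsub (T x) (T y)) (hsub x y)) by vring.
  rewrite id, <- hnorm_sq.
  assert (c := cs E (hsub (T x) (T y)) (hsub x y)).
  assert (h := hT x y).
  assert (0 <= hnorm (hsub (T x) (T y))) by apply hnorm_nonneg.
  assert (0 <= hnorm (hsub x y)) by apply hnorm_nonneg.
  nra.
Qed.

Lemma zs s : 0 < s <= /2 -> exists z, hscal E (1 - s) (T z) = z /\ hnorm z <= r /\ hnorm (hsub (T z) z) <= 2 * s * r.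
Proof.
  intro hs.
  destruct (banach E (fun y => hscal E (1 - s) (T y)) (1 - s)) as [z Hz].
  { lra. }
  { intros x y. apply norm_le_of_sq. apply Rmult_le_pos; [lra|apply hnorm_nonneg].
    assert (id : hinner E (hsub (hscal E (1 - s) (T x)) (hscal E (1 - s) (T y))) (hsub (hscal E (1 - s) (T x)) (hscal E (1 - s) (T y)))
       = (1 - s) * (1 - s) * hinner E (hsub (T x) (T y)) (hsub (T x) (T y))) by vring.
    rewrite id. assert (h := sq_of_norm_le E _ _ (hT x y)).
    assert (0 <= (1 - s) * (1 - s)) by nra.
    replace ((1 - s) * hnorm (hsub x y) * ((1 - s) * hnorm (hsub x y))) with ((1 - s) * (1 - s) * (hnorm (hsub x y) * hnorm (hsub x y))) by ring.
    apply Rmult_le_compat_l; auto. }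
  exists z. split; auto.
  assert (hnz : 0 <= hnorm z) by apply hnorm_nonneg.
  assert (claim : forall eps, 0 < eps -> s * ((hnorm z) * (hnorm z) - (hnorm z) * r) <= (1 - s) * eps * ((hnorm z) + r)).
  { intros eps he. destruct (happ eps he) as [x [hx hex]].
    assert (M := mono z x).
    assert (c1 := cs E z x).
    assert (c2 := cs E (hsub (T x) x) (hsub z x)).
    assert (t := norm_triv2 E z x).
    assert (hzz := hnorm_sq E z).
    assert (b : hinner E (hsub (T x) x) (hsub z x) <= eps * ((hnorm z) + r)).
    { assert (0 <= hnorm (hsub (T x) x)) by apply hnorm_nonneg.
      assert (0 <= hnorm (hsub z x)) by apply hnorm_nonneg.
      assert (0 <= hnorm x) by apply hnorm_nonneg.
      apply Rle_trans with (hnorm (hsub (T x) x) * hnorm (hsub z x)); auto.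
      apply Rmult_le_compat; auto; lra. }
    assert (id : (1 - s) * hinner E (hsub (hsub z (T z)) (hsub x (T x))) (hsub z x) =
       - s * (hinner E z z - hinner E z x) + (1 - s) * hinner E (hsub (T x) x) (hsub z x)).
    { clear - Hz. revert Hz. generalize (T x) as tx. generalize (T z) as w. intros w tx Hz. subst z. vring. }
    assert (0 <= (1 - s) * hinner E (hsub (hsub z (T z)) (hsub x (T x))) (hsub z x)) by (apply Rmult_le_pos; lra).
    assert (0 <= hnorm x) by apply hnorm_nonneg.
    assert (hinner E z x <= (hnorm z) * r) by (eapply Rle_trans; [exact c1| apply Rmult_le_compat_l; auto]).
    assert ((1 - s) * hinner E (hsub (T x) x) (hsub z x) <= (1 - s) * (eps * ((hnorm z) + r))) by (apply Rmult_le_compat_l; lra).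
    nra. }
  split.
  - destruct (Rle_or_lt (hnorm z) r) as [l|l]; auto. exfalso.
    set (a := s * ((hnorm z) * (hnorm z) - (hnorm z) * r)).
    assert (ha : 0 < a) by (unfold a; apply Rmult_lt_0_compat; nra).
    set (K := (1 - s) * ((hnorm z) + r) + 1). assert (hK : 0 < K) by (unfold K; nra).
    assert (he : 0 < a / (2 * K)) by (apply Rdiv_lt_0_compat; lra).
    specialize (claim _ he). fold a in claim.
    assert (e : (1 - s) * (a / (2 * K)) * ((hnorm z) + r) = a * ((1 - s) * ((hnorm z) + r)) / (2 * K)) by (field; lra).
    rewrite e in claim.
    assert (a * ((1 - s) * ((hnorm z) + r)) / (2 * K) < a).
    { apply (Rmult_lt_reg_r (2 * K)); [lra|]. unfold Rdiv. rewrite Rmult_assoc, Rinv_l; [|lra].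
      unfold K. nra. }
    lra.
  -
    assert (hn : (hnorm z) <= r).
    { destruct (Rle_or_lt (hnorm z) r) as [l|l]; auto. exfalso.
      set (a := s * ((hnorm z) * (hnorm z) - (hnorm z) * r)).
      assert (ha : 0 < a) by (unfold a; apply Rmult_lt_0_compat; nra).
      set (K := (1 - s) * ((hnorm z) + r) + 1). assert (hK : 0 < K) by (unfold K; nra).
      assert (he : 0 < a / (2 * K)) by (apply Rdiv_lt_0_compat; lra).
      specialize (claim _ he). fold a in claim.
      assert (e : (1 - s) * (a / (2 * K)) * ((hnorm z) + r) = a * ((1 - s) * ((hnorm z) + r)) / (2 * K)) by (field; lra).
      rewrite e in claim.
      assert (a * ((1 - s) * ((hnorm z) + r)) / (2 * K) < a).
      { apply (Rmult_lt_reg_r (2 * K)); [lra|]. unfold Rdiv. rewrite Rmult_assoc, Rinv_l; [|lra].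
        unfold K. nra. }
      lra. }
    assert (hzz := hnorm_sq E z).
    apply norm_le_of_sq; [nra|].
    assert (id1 : hinner E (hsub (T z) z) (hsub (T z) z) = s * s * hinner E (T z) (T z)).
    { clear - Hz. revert Hz. generalize (T z) as w. intros w Hz. subst z. vring. }
    assert (id2 : hinner E z z = (1 - s) * (1 - s) * hinner E (T z) (T z)).
    { clear - Hz. revert Hz. generalize (T z) as w. intros w Hz. subst z. vring. }
    rewrite id1. assert (hw := hinner_pos E (T z)).
    assert ((hnorm z) * (hnorm z) <= r * r) by nra.
    assert (q1 : /4 <= (1 - s) * (1 - s)) by nra.
    assert (q2 : /4 * hinner E (T z) (T z) <= (1 - s) * (1 - s) * hinner E (T z) (T z)) by (apply Rmult_le_compat_r; lra).
    assert (hinner E (T z) (T z) <= 4 * (r * r)) by lra.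
    nra.
Qed.

End Fix.

Lemma pair_core (E : Hilbert) s t (z1 z2 w1 w2 : E) : 0 < t < s -> s < 1 ->
  hscal E (1 - s) w1 = z1 -> hscal E (1 - t) w2 = z2 ->
  0 <= hinner E (hsub (hsub z1 w1) (hsub z2 w2)) (hsub z1 z2) ->
  hinner E z1 z1 <= hinner E z2 z2 /\ hinner E (hsub z1 z2) (hsub z1 z2) <= hinner E z2 z2 - hinner E z1 z1.
Proof.
  intros hts hs1 H1 H2 M. subst z1 z2.
  set (p := s * (1 - t)). set (q := t * (1 - s)).
  assert (e1 : hinner E (hscal E (1 - s) w1) (hscal E (1 - s) w1) = (1 - s) * (1 - s) * hinner E w1 w1) by vring.
  assert (e2 : hinner E (hscal E (1 - t) w2) (hscal E (1 - t) w2) = (1 - t) * (1 - t) * hinner E w2 w2) by vring.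
  assert (e3 : hinner E (hsub (hscal E (1 - s) w1) (hscal E (1 - t) w2)) (hsub (hscal E (1 - s) w1) (hscal E (1 - t) w2))
     = (1 - s) * (1 - s) * hinner E w1 w1 + (1 - t) * (1 - t) * hinner E w2 w2 - 2 * ((1 - s) * (1 - t) * hinner E w1 w2)) by vring.
  assert (e4 : hinner E (hsub (hsub (hscal E (1 - s) w1) w1) (hsub (hscal E (1 - t) w2) w2)) (hsub (hscal E (1 - s) w1) (hscal E (1 - t) w2))
     = - s * (1 - s) * hinner E w1 w1 - t * (1 - t) * hinner E w2 w2 + (s + t - 2 * s * t) * hinner E w1 w2) by vring.
  rewrite e4 in M. rewrite e1, e2, e3.
  assert (hD := hinner_pos E (hsub (hscal E (1 - s) w1) (hscal E (1 - t) w2))). rewrite e3 in hD.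
  apply (rl2 p q); auto.
  - unfold p, q. split; nra.
  - assert (0 <= (1 - s) * (1 - t)) by nra.
    assert (h := Rmult_le_pos _ _ H M).
    unfold p, q. nra.
Qed.

Section Fix2.
Variable E : Hilbert.
Variable T : E -> E.
Hypothesis hT : forall x y, hnorm (hsub (T x) (T y)) <= hnorm (hsub x y).
Variable r : R.
Hypothesis hr : 0 <= r.
Hypothesis happ : forall eps, 0 < eps -> exists x, hnorm x <= r /\ hnorm (hsub (T x) x) <= eps.

Definition sv n := / INR (S (S n)).

Lemma sv_prop n : 0 < sv n <= /2.
Proof.
  unfold sv. split. apply inv_pos. apply Rinv_le_contravar. lra.
  rewrite !S_INR. assert (0 <= INR n) by apply pos_INR. lra.
Qed.

Lemma sv_lt n m : (n < m)%nat -> sv m < sv n.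
Proof.
  intro h. unfold sv. apply Rinv_lt_contravar. apply Rmult_lt_0_compat; apply lt_0_INR; lia.
  apply lt_INR; lia.
Qed.

Lemma sv_le n : sv n <= / INR (S n).
Proof.
  unfold sv. apply Rinv_le_contravar. apply lt_0_INR; lia. apply le_INR; lia.
Qed.

Lemma fixpt : exists z, T z = z /\ hnorm z <= r.
Proof.
  assert (hz : forall n, exists z, hscal E (1 - sv n) (T z) = z /\ hnorm z <= r /\ hnorm (hsub (T z) z) <= 2 * sv n * r).
  { intro n. apply (zs E T hT r hr happ). apply sv_prop. }
  set (zf := fun n => proj1_sig (constructive_indefinite_description _ (hz n))).
  assert (hzf : forall n, hscal E (1 - sv n) (T (zf n)) = zf n /\ hnorm (zf n) <= r /\ hnorm (hsub (T (zf n)) (zf n)) <= 2 * sv n * r).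
  { intro n. unfold zf. destruct (constructive_indefinite_description _ _); auto. }
  assert (pair : forall n m, (n < m)%nat -> hinner E (zf n) (zf n) <= hinner E (zf m) (zf m) /\
     hinner E (hsub (zf n) (zf m)) (hsub (zf n) (zf m)) <= hinner E (zf m) (zf m) - hinner E (zf n) (zf n)).
  { intros n m hnm. apply (pair_core E (sv n) (sv m) (zf n) (zf m) (T (zf n)) (T (zf m))).
    split. apply sv_prop. apply sv_lt; auto.
    generalize (sv_prop n); lra.
    apply hzf. apply hzf. apply (mono E T hT). }
  set (u := fun n => hinner E (zf n) (zf n)).
  assert (hgrow : Un_growing u). { intro n. apply pair. lia. }
  assert (hub : has_ub u).
  { exists (r * r). intros x [n ->]. unfold u. apply sq_of_norm_le. apply hzf. }
  assert (hcau := CV_Cauchy u (growing_cv u hgrow hub)).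
  assert (hC : forall eps, 0 < eps -> exists N, forall m n, (N <= m)%nat -> (N <= n)%nat -> hnorm (hsub (zf m) (zf n)) < eps).
  { intros eps he. destruct (hcau (eps * eps) ltac:(nra)) as [N hN]. exists N.
    assert (key : forall m n, (N <= m)%nat -> (N <= n)%nat -> (m < n)%nat -> hnorm (hsub (zf m) (zf n)) < eps).
    { intros m n hm hn hmn. destruct (pair m n hmn) as [_ p2].
      specialize (hN n m hn hm). unfold Rdist, u in hN.
      assert (hinner E (hsub (zf m) (zf n)) (hsub (zf m) (zf n)) < eps * eps).
      { eapply Rle_lt_trans; [exact p2|]. eapply Rle_lt_trans; [apply Rle_abs|exact hN]. }
      rewrite <- hnorm_sq in H. generalize (hnorm_nonneg E (hsub (zf m) (zf n))). nra. }
    intros m n hm hn. destruct (Nat.lt_trichotomy m n) as [h|[h|h]].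
    - apply key; auto.
    - subst. rewrite norm_subxx. lra.
    - rewrite norm_sub_sym. apply key; auto. }
  destruct (complete E zf hC) as [l hl]. exists l. split.
  - apply eq_of_small. intros eps he.
    assert (he4 : 0 < eps / 4) by lra.
    destruct (hl _ he4) as [N1 hN1].
    assert (hd : 0 < eps / (4 * (r + 1))) by (apply Rdiv_lt_0_compat; lra).
    destruct (inv_small _ hd) as [N2 hN2].
    set (n := Nat.max N1 N2).
    assert (a1 := hN1 n ltac:(lia)). assert (a2 := hN2 n ltac:(lia)).
    assert (a3 := sv_le n). assert (a4 := proj2 (proj2 (hzf n))).
    assert (t1 := tri_sub E (T l) (T (zf n)) l).
    assert (t2 := tri_sub E (T (zf n)) (zf n) l).
    assert (t3 := hT l (zf n)). rewrite (norm_sub_sym E l (zf n)) in t3.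
    assert (hsv : sv n * (4 * (r + 1)) < eps).
    { assert (sv n < eps / (4 * (r + 1))) by lra.
      apply (Rmult_lt_compat_r (4 * (r + 1))) in H; [|lra].
      unfold Rdiv in H. rewrite Rmult_assoc, Rinv_l in H; lra. }
    assert (0 < sv n) by apply sv_prop.
    nra.
  - apply le_eps. intros eps he. destruct (hl _ he) as [N hN].
    assert (a := hN N (le_n _)). assert (b := norm_triv E l (zf N)).
    rewrite norm_sub_sym in b. assert (c := proj1 (proj2 (hzf N))). lra.
Qed.
End Fix2.

Theorem proposition3 (E : Hilbert) (k : nat) (A : nat -> E -> Prop)
  (hk : (1 <= k)%nat)
  (hA : forall i, (i < k)%nat -> nonempty (A i) /\ convex (A i) /\ closed (A i))
  (r : R) (hr : 0 < r) :
  forall alpha, 0 <= alpha <= 1 ->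
    (forall eps, 0 < eps -> exists beta, F_set E A k r beta /\ Rabs (alpha - beta) < eps) ->
    F_set E A k r alpha.
Proof.
  intros alpha hal happ.
  assert (hT := comp_nonexp E A k hA alpha hal k (le_n k)).
  destruct (comp_bound E A k hA alpha r hal ltac:(lra) k (le_n k)) as [B [S [hB [hS hb]]]].
  assert (happ' : forall eps, 0 < eps -> exists x, hnorm x <= r /\
      hnorm (hsub (comp_relaxed alpha A k x) x) <= eps).
  { intros eps he.
    assert (hd : 0 < eps / (S + 1)) by (apply Rdiv_lt_0_compat; lra).
    destruct (happ _ hd) as [be [[hbe [x [hx hxr]]] hab]].
    exists x. split; auto.
    destruct (hb be x hbe hxr) as [_ h]. rewrite hx in h.
    assert (e : Rabs (alpha - be) * (S + 1) < eps).
    { apply (Rmult_lt_compat_r (S + 1)) in hab; [|lra].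
      unfold Rdiv in hab. rewrite Rmult_assoc, Rinv_l in hab; lra. }
    assert (0 <= Rabs (alpha - be)) by apply Rabs_pos.
    nra. }
  destruct (fixpt E (comp_relaxed alpha A k) hT r ltac:(lra) happ') as [z [hz hzr]].
  split; auto. exists z; auto.
Qed.
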